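(* Let $\{A_n\}_{n\ge1}$ be i.i.d. positive random variables, $X_1=\log A_1$, with $\mathbb EX_1<0$ and $\mathbb E|X_1|^q<\infty$ for some integer $q\ge2$. Let $P$ be the transition kernel on $[0,\infty)$ of the Markov chain $Z_{n+1}=A_{n+1}Z_n+1$, i.e. $PV(x)=\mathbb E[V(A_1x+1)]$, and let $V(x)=(\log x)^q\mathbb 1_{\{x>e\}}+\mathbb 1_{\{x\le e\}}$ for $x\ge0$. Then there exist constants $c>0$, $K<\infty$ and $b<\infty$ such that, with $C=[0,K]$, $$PV(x)\le V(x)-cV(x)^{(q-1)/q}+b\mathbb 1_C(x)\qquad\text{for all }x\ge0.$$ *)

(* Defs.v *)
From HB Require Import structures.
From mathcomp Require Import all_boot all_order all_algebra.
From mathcomp Require Import all_classical all_reals all_analysis.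
Set Implicit Arguments. Unset Strict Implicit. Unset Printing Implicit Defensive.
Import Order.TTheory GRing.Theory Num.Theory.
Local Open Scope ring_scope.

Definition Vfun {R : realType} (q : nat) (x : R) : R :=
  if expR 1 < x then (ln x) ^+ q else 1.

Definition PV {R : realType} (d : measure_display) (T : measurableType d)
  (P : probability T R) (A : T -> R) (q : nat) (x : R) : \bar R :=
  (\int[P]_w (Vfun q (A w * x + 1))%:E)%E.

Definition ind01 {R : realType} (K x : R) : R :=
  if (0 <= x) && (x <= K) then 1 else 0.

(* Main.v *)
Require Import Defs.
From HB Require Import structures.
From mathcomp Require Import all_boot all_order all_algebra.
From mathcomp Require Import all_classical all_reals all_analysis.
From mathcomp Require Import ring lra.
Import Order.TTheory GRing.Theory Num.Theory.
Local Open Scope ring_scope.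
Lemma interp {R : realDomainType} (L t : R) (n j : nat) : 0 <= L -> 0 <= t -> (j <= n)%N ->
  L ^+ (n - j) * t ^+ j.+2 <= L ^+ n * t ^+ 2 + t ^+ n.+2.
Proof.
move=> L0 t0 jn.
have p1 : 0 <= L ^+ n * t ^+ 2 by rewrite mulr_ge0 // exprn_ge0.
have p2 : 0 <= t ^+ n.+2 by rewrite exprn_ge0.
have e1 : t ^+ j.+2 = t ^+ j * t ^+ 2 by rewrite -exprD addn2.
have [tL|Lt] := lerP t L.
- have h : L ^+ (n - j) * t ^+ j <= L ^+ n.
    rewrite -{2}(subnK jn) exprD ler_wpM2l ?exprn_ge0 // lerXn2r // nnegrE.
  have h2 : L ^+ (n - j) * t ^+ j.+2 <= L ^+ n * t ^+ 2.
    by rewrite e1 mulrA ler_wpM2r // exprn_ge0.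
  lra.
- have h : L ^+ (n - j) <= t ^+ (n - j) by rewrite lerXn2r // ?nnegrE // ltW.
  have h2 : L ^+ (n - j) * t ^+ j.+2 <= t ^+ n.+2.
    have e2 : t ^+ n.+2 = t ^+ (n - j) * t ^+ j.+2 by rewrite -exprD !addnS subnK.
    by rewrite e2 ler_wpM2r // exprn_ge0.
  lra.
Qed.

Lemma binom_bound {R : realFieldType} (L y : R) n : 0 <= L ->
  (L + y) ^+ n.+2 <= L ^+ n.+2 + n.+2%:R * L ^+ n.+1 * y
     + 2 ^+ n.+2 * (L ^+ n * y ^+ 2 + `|y| ^+ n.+2).
Proof.
move=> L0.
set S := (L ^+ n * y ^+ 2 + `|y| ^+ n.+2).
have two : (2 : R) ^+ n.+2 = 1 + n.+2%:R + \sum_(i < n.+1) ('C(n.+2, i.+2))%:R.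
  rewrite -[2]/(1 + 1) exprD1n big_ord_recl big_ord_recl /=.
  rewrite expr0 bin0 bin1 expr1 addrA; congr (_ + _ + _).
  by apply: eq_bigr => i _; rewrite expr1n.
rewrite exprDn big_ord_recl big_ord_recl /=.
rewrite /bump /= !add1n subn0 expr0 mulr1 bin0 mulr1n bin1 expr1 subSS subn0.
have S0 : 0 <= S.
  apply: addr_ge0; [apply: mulr_ge0; [exact: exprn_ge0|exact: sqr_ge0]|exact: exprn_ge0 (normr_ge0 _)].
under eq_bigr => i _ do rewrite !add1n !subSS.
have hs : \sum_(i < n.+1) L ^+ (n - i) * y ^+ i.+2 *+ 'C(n.+2, i.+2)
    <= (\sum_(i < n.+1) ('C(n.+2, i.+2))%:R) * S.
  rewrite mulr_suml; apply: ler_sum => i _.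
  rewrite -mulr_natr mulrC ler_wpM2l //.
  apply: le_trans (ler_norm _) _.
  rewrite normrM normrX (ger0_norm L0) normrX.
  have := @interp R L `|y| n i L0 (normr_ge0 _) (ltn_ord i).
  by rewrite real_normK ?num_real.
have ex : (1 + n.+2%:R + \sum_(i < n.+1) ('C(n.+2, i.+2))%:R) * S
   = S + n.+2%:R * S + (\sum_(i < n.+1) ('C(n.+2, i.+2))%:R) * S by ring.
rewrite two ex.
have e : n.+2%:R * L ^+ n.+1 * y = L ^+ n.+1 * y *+ n.+2 by rewrite mulr_natl mulrnAl.
have : 0 <= n.+2%:R * S by rewrite mulr_ge0.
lra.
Qed.

Lemma rhs_ge0 {R : realFieldType} (L y : R) n : 0 <= L ->
  0 <= L ^+ n.+2 + n.+2%:R * L ^+ n.+1 * y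
     + 2 ^+ n.+2 * (L ^+ n * y ^+ 2 + `|y| ^+ n.+2).
Proof.
move=> L0; have [h|h] := lerP 0 (L + y).
  by have := binom_bound L y n L0; have := exprn_ge0 n.+2 h; lra.
have yn : y < 0 by lra.
have Ly : L <= `|y| by rewrite ltr0_norm //; lra.
have p1 : L ^+ n.+1 <= `|y| ^+ n.+1 by rewrite lerXn2r // nnegrE.
have e : `|y| ^+ n.+2 = `|y| ^+ n.+1 * (- y) by rewrite exprSr ltr0_norm.
have q1 : 0 <= n.+2%:R * ((`|y| ^+ n.+1 - L ^+ n.+1) * (- y)).
  by rewrite mulr_ge0 // mulr_ge0 // ?subr_ge0 //; lra.
have eq : n.+2%:R * L ^+ n.+1 * y
   = n.+2%:R * ((`|y| ^+ n.+1 - L ^+ n.+1) * (- y)) - n.+2%:R * `|y| ^+ n.+2.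
  by rewrite e; ring.
have N2 : (n.+2%:R : R) <= 2 ^+ n.+2.
  by rewrite -natrX ler_nat ltnW // ltn_expl.
have q2 : 0 <= L ^+ n * y ^+ 2 by apply: mulr_ge0; [exact: exprn_ge0|exact: sqr_ge0].
have q3 : n.+2%:R * `|y| ^+ n.+2 <= 2 ^+ n.+2 * (L ^+ n * y ^+ 2 + `|y| ^+ n.+2).
  apply: (@le_trans _ _ (2 ^+ n.+2 * `|y| ^+ n.+2)).
    by rewrite ler_wpM2r // exprn_ge0.
  by rewrite ler_wpM2l ?exprn_ge0 //; lra.
have : 0 <= L ^+ n.+2 by rewrite exprn_ge0.
rewrite eq; lra.
Qed.

Definition Rf {R : realFieldType} n (L y : R) :=
  L ^+ n.+2 + n.+2%:R * L ^+ n.+1 * y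
     + 2 ^+ n.+2 * (L ^+ n * y ^+ 2 + `|y| ^+ n.+2).

Lemma V_bound {R : realType} (a x δ : R) n : 0 < a -> 0 <= x -> 0 < δ ->
  Vfun n.+2 (a * x + 1) <=
    (ln (δ^-1 + 1)) ^+ n.+2 + 1 + Rf n (Num.max (ln x) 0) (ln a + δ).
Proof.
move=> a0 x0 d0.
set L := Num.max (ln x) 0.
have L0 : 0 <= L by rewrite le_max lexx orbT.
have Rf0 := rhs_ge0 L (ln a + δ) n L0.
have M0 : 0 < δ^-1 by rewrite invr_gt0.
have B0 : 0 <= ln (δ^-1 + 1) ^+ n.+2.
  by apply: exprn_ge0; apply: ln_ge0; lra.
have ax0 : 0 <= a * x by rewrite mulr_ge0 // ltW.
rewrite /Vfun; case: ifP => he; last by rewrite /Rf in Rf0 *; lra.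
have lnu0 : 0 <= ln (a * x + 1) by apply: ln_ge0; lra.
have [axM|Max] := ltP (a * x) δ^-1.
  have h : ln (a * x + 1) <= ln (δ^-1 + 1).
    by rewrite ler_ln ?posrE; lra.
  have : ln (a * x + 1) ^+ n.+2 <= ln (δ^-1 + 1) ^+ n.+2.
    by apply: lerXn2r; rewrite ?nnegrE; lra.
  rewrite /Rf in Rf0 *; lra.
have axp : 0 < a * x by exact: lt_le_trans M0 Max.
have xp : 0 < x.
  by rewrite lt_neqAle x0 andbT; apply/eqP => x0'; move: axp; rewrite -x0' mulr0 ltxx.
have e1 : a * x + 1 = (a * x) * (1 + (a * x)^-1) by rewrite mulrDr mulr1 mulfV ?gt_eqF.
have iv0 : 0 < (a * x)^-1 by rewrite invr_gt0.
have h1 : ln (1 + (a * x)^-1) <= (a * x)^-1.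
  rewrite -{2}(expRK (a * x)^-1) ler_ln ?posrE ?expR_gt0 ?expR_ge1Dx //; lra.
have h2 : (a * x)^-1 <= δ.
  by rewrite -[X in _ <= X]invrK lef_pV2 ?posrE.
have h3 : ln (a * x + 1) <= ln a + ln x + δ.
  rewrite e1 lnM ?posrE // ?lnM ?posrE //; lra.
have h4 : ln x <= L by rewrite le_max lexx.
have h5 : 0 <= L + (ln a + δ) by lra.
have : ln (a * x + 1) ^+ n.+2 <= (L + (ln a + δ)) ^+ n.+2.
  by apply: lerXn2r; rewrite ?nnegrE; lra.
have := binom_bound L (ln a + δ) n L0.
rewrite /Rf in Rf0 *; lra.
Qed.

Lemma sq_le {R : realFieldType} (y : R) n : y ^+ 2 <= 1 + `|y| ^+ n.+2.
Proof.
rewrite -real_normK ?num_real //.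
have h0 : 0 <= `|y| ^+ n.+2 by exact: exprn_ge0.
have [y1|y1] := lerP `|y| 1.
  have : `|y| ^+ 2 <= 1 by rewrite exprn_ile1.
  lra.
have : `|y| ^+ 2 <= `|y| ^+ n.+2 by rewrite ler_weXn2l //; lra.
lra.
Qed.

Lemma powY {R : realFieldType} (X δ : R) n : 0 <= δ <= 1 ->
  `|X + δ| ^+ n.+2 <= 2 ^+ n.+2 * (`|X| ^+ n.+2 + 1).
Proof.
move=> /andP[d0 d1].
have h : `|X + δ| <= `|X| + 1.
  by apply: le_trans (ler_normD _ _) _; rewrite (ger0_norm d0); lra.
have h1 : `|X + δ| ^+ n.+2 <= (`|X| + 1) ^+ n.+2.
  by apply: lerXn2r; rewrite ?nnegrE //; lra.
apply: le_trans h1 _.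
have p0 : 0 <= `|X| ^+ n.+2 by exact: exprn_ge0.
have p2 : 0 <= (2 : R) ^+ n.+2 by exact: exprn_ge0.
have [x1|x1] := lerP `|X| 1.
  have : (`|X| + 1) ^+ n.+2 <= 2 ^+ n.+2.
    by apply: lerXn2r; rewrite ?nnegrE //; lra.
  have : 0 <= 2 ^+ n.+2 * `|X| ^+ n.+2 by rewrite mulr_ge0.
  rewrite mulrDr mulr1; lra.
have : (`|X| + 1) ^+ n.+2 <= (2 * `|X|) ^+ n.+2.
  by apply: lerXn2r; rewrite ?nnegrE //; lra.
rewrite exprMn mulrDr mulr1; lra.
Qed.

Lemma Rf_simpl {R : realFieldType} (L X δ : R) n : 0 <= L -> 0 <= δ <= 1 ->
  Rf n L (X + δ) <= L ^+ n.+2 + n.+2%:R * L ^+ n.+1 * δ + n.+2%:R * L ^+ n.+1 * X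
     + 2 ^+ n.+2 * (L ^+ n + 1) * (1 + 2 ^+ n.+2 * (`|X| ^+ n.+2 + 1)).
Proof.
move=> L0 hd.
have p := powY X δ n hd.
have s := sq_le (X + δ) n.
have Ln : 0 <= L ^+ n by exact: exprn_ge0.
have q1 : L ^+ n * (X + δ) ^+ 2 <= L ^+ n * (1 + `|X + δ| ^+ n.+2) by rewrite ler_wpM2l.
have q0 : 0 <= `|X + δ| ^+ n.+2 by exact: exprn_ge0.
have q2 : L ^+ n * (X + δ) ^+ 2 + `|X + δ| ^+ n.+2 <=
   (L ^+ n + 1) * (1 + 2 ^+ n.+2 * (`|X| ^+ n.+2 + 1)).
  apply: (@le_trans _ _ ((L ^+ n + 1) * (1 + `|X + δ| ^+ n.+2))).
    have : 0 <= L ^+ n * `|X + δ| ^+ n.+2 by rewrite mulr_ge0.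
    rewrite mulrDl mul1r mulrDr mulr1 in q1 *; lra.
  rewrite ler_wpM2l //; lra.
have p2 : 0 <= (2 : R) ^+ n.+2 by exact: exprn_ge0.
have := ler_wpM2l p2 q2.
have e : n.+2%:R * L ^+ n.+1 * (X + δ) =
  n.+2%:R * L ^+ n.+1 * δ + n.+2%:R * L ^+ n.+1 * X by ring.
rewrite /Rf e -[2 ^+ n.+2 * (L ^+ n + 1) * _]mulrA; lra.
Qed.

Lemma Vfun_measurable {R : realType} (N : nat) :
  measurable_fun setT (Vfun (R:=R) N).
Proof.
rewrite /Vfun; apply: measurable_fun_ifT.
- exact: measurable_realfun.measurable_fun_ltr.
- exact: measurable_realfun.measurable_funX.
- exact: measurable_cst.
Qed.

Lemma PV_bound {R : realType} (d : measure_display) (T : measurableType d)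
  (P : probability T R) (A : {RV P >-> R}) n
  (Apos : forall w, 0 < A w)
  (hint : P.-integrable setT (fun w => (`| ln (A w) | ^+ n.+2)%:E))
  (intX : P.-integrable setT (fun w => (ln (A w))%:E))
  (mr H δ x : R)
  (hE : (\int[P]_w (ln (A w))%:E = mr%:E)%E)
  (hH : (\int[P]_w (`| ln (A w) | ^+ n.+2)%:E = H%:E)%E)
  (d0 : 0 < δ) (d1 : δ <= 1) (x0 : 0 <= x) (L : R) (hL : L = Num.max (ln x) 0) :
  (PV P A n.+2 x <= (ln (δ^-1 + 1) ^+ n.+2 + 1 + L ^+ n.+2 + n.+2%:R * L ^+ n.+1 * δ
     + 2 ^+ n.+2 * (L ^+ n + 1) * (1 + 2 ^+ n.+2)
     + n.+2%:R * L ^+ n.+1 * mr + 2 ^+ n.+2 * (L ^+ n + 1) * 2 ^+ n.+2 * H)%:E)%E.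
Proof.
have L0 : 0 <= L by rewrite hL le_max lexx orbT.
set al := ln (δ^-1 + 1) ^+ n.+2 + 1 + L ^+ n.+2 + n.+2%:R * L ^+ n.+1 * δ
     + 2 ^+ n.+2 * (L ^+ n + 1) * (1 + 2 ^+ n.+2).
set be := n.+2%:R * L ^+ n.+1.
set ga := 2 ^+ n.+2 * (L ^+ n + 1) * 2 ^+ n.+2.
have pw : forall w, Vfun n.+2 (A w * x + 1) <= al + be * ln (A w) + ga * `| ln (A w) | ^+ n.+2.
  move=> w.
  have h1 := V_bound (A w) x δ n (Apos w) x0 d0.
  have h2 := Rf_simpl L (ln (A w)) δ n L0.
  rewrite -hL in h1.
  have e : 2 ^+ n.+2 * (L ^+ n + 1) * (1 + 2 ^+ n.+2 * (`|ln (A w)| ^+ n.+2 + 1))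
    = 2 ^+ n.+2 * (L ^+ n + 1) * (1 + 2 ^+ n.+2) + ga * `|ln (A w)| ^+ n.+2 by rewrite /ga; ring.
  have : 0 <= δ <= 1 by rewrite (ltW d0) d1.
  move=> /h2; rewrite e /al /be; lra.
have mA : measurable_fun setT A := measurable_funPT A.
have mX : measurable_fun setT (fun w => ln (A w)).
  have := measurableT_comp (@measurable_realfun.measurable_ln R) mA. exact.
have mXq : measurable_fun setT (fun w => `| ln (A w) | ^+ n.+2).
  by apply/measurable_realfun.measurable_EFinP; exact: (measurable_int _ hint).
rewrite /PV.
apply: le_trans.
  apply: (@ge0_le_integral _ _ _ P setT measurableT _
     (fun w => (al + be * ln (A w) + ga * `| ln (A w) | ^+ n.+2)%:E)).
  - move=> w _; rewrite lee_fin /Vfun; case: ifP => // h.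
    apply: exprn_ge0; apply: ln_ge0; have := expR_ge1Dx (1:R); lra.
  - apply/measurable_realfun.measurable_EFinP.
    apply: measurableT_comp (Vfun_measurable _) _.
    have := measurable_realfun.measurable_funD
      (measurable_realfun.measurable_funM mA (measurable_cst x)) (measurable_cst (1:R)).
    exact.
  - apply/measurable_realfun.measurable_EFinP.
    have := measurable_realfun.measurable_funD (measurable_realfun.measurable_funD
      (measurable_cst al) (measurable_realfun.measurable_funM (measurable_cst be) mX))
      (measurable_realfun.measurable_funM (measurable_cst ga) mXq).
    exact.
  - by move=> w _; rewrite lee_fin.
rewrite (_ : (fun w => (al + be * ln (A w) + ga * `|ln (A w)| ^+ n.+2)%:E) =
   (fun w => (al%:E + be%:E * (ln (A w))%:E) + ga%:E * (`|ln (A w)| ^+ n.+2)%:E)%E);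
  last by apply: funext => w; rewrite !EFinD !EFinM.
have I0 : P.-integrable setT (fun w => al%:E) := finite_measure_integrable_cst P al measurableT.
have IX : P.-integrable setT (fun w => be%:E * (ln (A w))%:E)%E by apply: integrableZl.
have Iq : P.-integrable setT (fun w => ga%:E * (`|ln (A w)| ^+ n.+2)%:E)%E by apply: integrableZl.
have I01 : P.-integrable setT (fun w => al%:E + be%:E * (ln (A w))%:E)%E by exact: integrableD.
rewrite (integralD measurableT I01 Iq) (integralD measurableT I0 IX).
rewrite (integralZl measurableT intX) (integralZl measurableT hint) hE hH.
have ic := integral_cst P measurableT al%:E.
move: ic; set m := (X in (al%:E * X)%E) => ic.
have p1 : m = 1%E by rewrite /m; exact: probability_setT.
rewrite p1 mule1 in ic; rewrite ic.
rewrite -!EFinM -!EFinD lee_fin /al /be /ga; lra.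
Qed.

Lemma powR_pow {R : realType} (L : R) n : 0 < L ->
  (L ^+ n.+2) `^ (n.+1%:R / n.+2%:R) = L ^+ n.+1.
Proof.
move=> L0.
rewrite -powR_mulrn ?ltW // -powRrM.
have -> : n.+2%:R * (n.+1%:R / n.+2%:R) = n.+1%:R :> R.
  by rewrite mulrC divfK // pnatr_eq0.
by rewrite powR_mulrn ?ltW.
Qed.

Theorem mainTheorem10 (R : realType) (d : measure_display) (T : measurableType d)
  (P : probability T R) (A : {RV P >-> R}) (q : nat)
  (hq : (2 <= q)%N)
  (Apos : forall w, 0 < A w)
  (hint : P.-integrable setT (fun w => (`| ln (A w) | ^+ q)%:E))
  (hneg : ('E_P[(fun w => ln (A w))] < 0)%E) :
  exists c K b : R, 0 < c /\
    forall x : R, 0 <= x ->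
      (PV P A q x <=
        (Vfun q x - c * (Vfun q x) `^ ((q - 1)%:R / q%:R) + b * ind01 K x)%:E)%E.
Proof.
case: q hq hint hneg => [|[|n]] // _ hint hneg.
have ea : ((n.+2 - 1)%:R : R) = n.+1%:R by rewrite subSS subn0.
rewrite ea.
have mA : measurable_fun setT A := measurable_funPT A.
have mX : measurable_fun setT (fun w => ln (A w)).
  have := measurableT_comp (@measurable_realfun.measurable_ln R) mA. exact.
have I1q : P.-integrable setT (fun w => (1 + `| ln (A w) | ^+ n.+2)%:E).
  rewrite (_ : (fun w => (1 + `| ln (A w) | ^+ n.+2)%:E) =
     (fun w => 1%:E + (`| ln (A w) | ^+ n.+2)%:E)%E); last first.
    by apply: funext => w; rewrite EFinD.
  have I0 : P.-integrable setT (fun w => (1:R)%:E) := finite_measure_integrable_cst P 1 measurableT.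
  exact: integrableD.
have intX : P.-integrable setT (fun w => (ln (A w))%:E).
  apply: (le_integrable measurableT _ _ I1q).
    by apply/measurable_realfun.measurable_EFinP; exact: mX.
  move=> w _; rewrite !abse_EFin lee_fin.
  set y := ln (A w).
  have p0 : 0 <= `|y| ^+ n.+2 by exact: exprn_ge0.
  rewrite [X in _ <= X]ger0_norm; last by lra.
  have [y1|y1] := lerP `|y| 1; first by lra.
  have : `|y| ^+ 1 <= `|y| ^+ n.+2 by rewrite ler_weXn2l //; lra.
  rewrite expr1; lra.
set mr := fine (\int[P]_w (ln (A w))%:E)%E.
have hE : (\int[P]_w (ln (A w))%:E = mr%:E)%E.
  by rewrite /mr fineK // (integrable_fin_num measurableT intX).
set H := fine (\int[P]_w (`| ln (A w) | ^+ n.+2)%:E)%E.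
have hH : (\int[P]_w (`| ln (A w) | ^+ n.+2)%:E = H%:E)%E.
  by rewrite /H fineK // (integrable_fin_num measurableT hint).
have H0 : 0 <= H.
  rewrite -lee_fin -hH; apply: integral_ge0 => w _; rewrite lee_fin; exact: exprn_ge0.
have mr0 : mr < 0.
  by move: hneg; rewrite unlock hE lte_fin.
set t := - mr.
have tE : t = - mr by [].
have t0 : 0 < t by rewrite /t; lra.
set δ := (1 + 2 / t)^-1.
have tp : 0 < 2 / t by rewrite divr_gt0.
have d0 : 0 < δ by rewrite /δ invr_gt0; lra.
have d1 : δ <= 1 by rewrite /δ -[X in _ <= X]invr1 lef_pV2 ?posrE; lra.
have dt : δ <= t / 2.
  rewrite /δ -[t / 2]invrK invf_div lef_pV2 ?posrE; lra.
set B := ln (δ^-1 + 1) ^+ n.+2 + 1.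
have B0 : 0 <= B.
  rewrite /B; have : 0 <= ln (δ^-1 + 1) ^+ n.+2; last by lra.
  apply: exprn_ge0; apply: ln_ge0; have : 0 < δ^-1 by rewrite invr_gt0.
  lra.
have p2 : (0 : R) <= 2 ^+ n.+2 by exact: exprn_ge0.
set E0 := 2 ^+ n.+2 * (1 + 2 ^+ n.+2) + 2 ^+ n.+2 * 2 ^+ n.+2 * H.
have E00 : 0 <= E0.
  rewrite /E0; have q1 : 0 <= 2 ^+ n.+2 * (1 + 2 ^+ n.+2) :> R.
    by apply: mulr_ge0 => //; lra.
  have q2 : 0 <= 2 ^+ n.+2 * 2 ^+ n.+2 * H.
    by apply: mulr_ge0 => //; apply: mulr_ge0.
  lra.
set L0 := 1 + 2 * (B + 2 * E0) / t.
have L01 : 1 <= L0.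
  rewrite /L0; have : 0 <= 2 * (B + 2 * E0) / t; last by lra.
  by rewrite divr_ge0 ?mulr_ge0 //; lra.
have L0t : B + 2 * E0 <= t / 2 * L0.
  have e : t / 2 * L0 = t / 2 + (B + 2 * E0).
    by rewrite /L0; field; apply/negP => /eqP; lra.
  rewrite e; lra.
exists δ, (expR L0), (B + L0 ^+ n.+2 + (L0 ^+ n + 1) * E0); split => // x x0.
have hPV := PV_bound d T P A n Apos hint intX mr H δ x hE hH d0 d1 x0 (Num.max (ln x) 0) erefl.
set L := Num.max (ln x) 0 in hPV.
have L0' : 0 <= L by rewrite le_max lexx orbT.
have eF : ln (δ^-1 + 1) ^+ n.+2 + 1 + L ^+ n.+2 + n.+2%:R * L ^+ n.+1 * δ
     + 2 ^+ n.+2 * (L ^+ n + 1) * (1 + 2 ^+ n.+2)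
     + n.+2%:R * L ^+ n.+1 * mr + 2 ^+ n.+2 * (L ^+ n + 1) * 2 ^+ n.+2 * H
   = B + L ^+ n.+2 + L ^+ n.+1 * (n.+2%:R * (δ + mr)) + (L ^+ n + 1) * E0.
  by rewrite /B /E0; ring.
rewrite eF in hPV; apply: le_trans hPV _; rewrite lee_fin.
have Nd : n.+2%:R * (δ + mr) <= - t.
  have h2 : (2 : R) <= n.+2%:R by rewrite ler_nat.
  have : 0 <= (n.+2%:R - 2) * (- (δ + mr)) by rewrite mulr_ge0 //; lra.
  rewrite mulrBl mulrN mulrN; lra.
have Ln0 : 0 <= L ^+ n by exact: exprn_ge0.
have Ln10 : 0 <= L ^+ n.+1 by exact: exprn_ge0.
have midle : L ^+ n.+1 * (n.+2%:R * (δ + mr)) <= 0.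
  by rewrite mulr_ge0_le0 //; lra.
rewrite /ind01 x0 /=.
have [xK|Kx] := lerP x (expR L0).
- rewrite mulr1.
  have lnxL0 : ln x <= L0.
    have [xp|xn] := ltP 0 x.
      by rewrite -(expRK L0) ler_ln ?posrE ?expR_gt0.
    by rewrite ln0 //; lra.
  have LL0 : L <= L0 by rewrite /L ge_max lnxL0 /=; lra.
  have h1 : L ^+ n.+2 <= L0 ^+ n.+2 by apply: lerXn2r; rewrite ?nnegrE //; lra.
  have h2 : L ^+ n <= L0 ^+ n by apply: lerXn2r; rewrite ?nnegrE //; lra.
  have h3 : (L ^+ n + 1) * E0 <= (L0 ^+ n + 1) * E0 by rewrite ler_wpM2r //; lra.
  have V1 : 1 <= Vfun n.+2 x.
    rewrite /Vfun; case: ifP => // h; apply: exprn_ege1.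
    rewrite -(expRK 1) ler_ln ?posrE ?expR_gt0 //; try lra.
    by apply: lt_trans h; exact: expR_gt0.
  have a1 : (n.+1%:R / n.+2%:R : R) <= 1 by rewrite ler_pdivrMr ?ltr0n // mul1r ler_nat.
  have Va := ler1_powR V1 a1.
  have Va0 := powR_ge0 (Vfun n.+2 x) (n.+1%:R / n.+2%:R).
  have : δ * Vfun n.+2 x `^ (n.+1%:R / n.+2%:R) <= Vfun n.+2 x `^ (n.+1%:R / n.+2%:R).
    by rewrite ler_piMl.
  lra.
- rewrite mulr0 addr0.
  have Kp : 0 < expR L0 by exact: expR_gt0.
  have xp : 0 < x by exact: lt_trans Kp Kx.
  have lnx : L0 < ln x by rewrite -(expRK L0) ltr_ln ?posrE.
  have eL : L = ln x by rewrite /L max_l //; lra.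
  have ex : expR 1 < x.
    apply: le_lt_trans Kx; by rewrite ler_expR.
  rewrite /Vfun ex -eL powR_pow; last by lra.
  have L1 : 1 <= L by lra.
  have Ln1 : 1 <= L ^+ n by exact: exprn_ege1.
  have eS : L ^+ n.+1 = L * L ^+ n by rewrite exprS.
  have k1 : B + (L ^+ n + 1) * E0 <= (B + 2 * E0) * L ^+ n.
    have : B <= B * L ^+ n by rewrite ler_peMr.
    have : E0 <= E0 * L ^+ n by rewrite ler_peMr.
    have e1 : (B + 2 * E0) * L ^+ n = B * L ^+ n + 2 * (E0 * L ^+ n) by ring.
    have e2 : (L ^+ n + 1) * E0 = E0 * L ^+ n + E0 by ring.
    rewrite e1 e2; lra.
  have k2 : (B + 2 * E0) * L ^+ n <= t / 2 * L ^+ n.+1.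
    rewrite eS mulrA ler_wpM2r //.
    apply: le_trans L0t _; rewrite ler_wpM2l //; lra.
  have k3 : δ * L ^+ n.+1 <= t / 2 * L ^+ n.+1 by rewrite ler_wpM2r.
  have k4 : L ^+ n.+1 * (n.+2%:R * (δ + mr)) <= - t * L ^+ n.+1.
    by rewrite mulrC ler_wpM2r.
  have : - t * L ^+ n.+1 = - (t / 2 * L ^+ n.+1) - (t / 2 * L ^+ n.+1) by field.
  lra.
Qed.
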